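(* Let a binary game be given as described in the context, and suppose Assumptions (A1) and (A2) hold. (i) If $\big(x_i,y_i,\widetilde y_i^{(1)},\widetilde y_i^{(0)},\widetilde\lambda_i^{(1)},\widetilde\lambda_i^{(0)},\kappa_i^{(1)},\kappa_i^{(0)},\zeta_i^{(1)},\zeta_i^{(0)}\big)_{i\in I}$ is an optimal solution of problem (P), then $(x_i,y_i)_{i\in I}$ with compensation $(\zeta_i)_{i\in I}$, $\zeta_i=\zeta_i^{(1)}+\zeta_i^{(0)}$, is a binary quasi-equilibrium. (ii) Conversely, if $(x_i,y_i)_{i\in I}$ with compensation $(\zeta_i)_{i\in I}$ is a binary quasi-equilibrium, then there exist vectors $\big(\widetilde y_i^{(1)},\widetilde y_i^{(0)},\widetilde\lambda_i^{(1)},\widetilde\lambda_i^{(0)},\kappa_i^{(1)},\kappa_i^{(0)},\zeta_i^{(1)},\zeta_i^{(0)}\big)_{i\in I}$ such that the combined point is feasible for problem (P).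
   Context: Binary game: players $i\in I=\{1,\dots,n\}$. Player $i$ chooses $x_i\in\{0,1\}$ and $y_i\in\mathbb{R}^m$ and solves $\min f_i(x_i,y_i,y_{-i})$ subject to $g_i(x_i,y_i)\le 0$, with $g_i:\{0,1\}\times\mathbb{R}^m\to\mathbb{R}^k$, $y_{-i}=(y_j)_{j\ne i}$; $K_i=\{(x_i,y_i):g_i(x_i,y_i)\le0\}$. Binary quasi-equilibrium: a vector $((x_i^*,y_i^* )\in K_i)_{i\in I}$ and compensations $\zeta_i\ge0$ such that for every $i$: (1) $y_i^*$ minimizes $f_i(x_i^*,\cdot,y_{-i}^* )$ over $\{y_i:g_i(x_i^*,y_i)\le0\}$; (2) $f_i(x_i^*,y_i^*,y_{-i}^* )-\zeta_i\le f_i(x_i^\times,y_i^\times,y_{-i}^* )$, where $x_i^\times=1-x_i^*$ and $y_i^\times$ minimizes $f_i(x_i^\times,\cdot,y_{-i}^* )$ over $\{y_i:g_i(x_i^\times,y_i)\le0\}$; (3) $\zeta_i$ is the minimal nonnegative number satisfying (2). Assumption (A1): for each $i$ and each fixed $x_i$ (and fixed $y_{-i}$), the KKT conditions of player $i$'s problem with respect to $y_i$ are necessary and sufficient, and $\{y_i:g_i(x_i,y_i)\le0\}$ is compact and non-empty. Assumption (A2): $F$ and $G$ (below) are convex quadratic or linear functions for every fixed value of the binary variables, and $\partial G/\partial\zeta_i>0$ for all $i$. Problem (P): with a sufficiently large constant $\widetilde K>0$ (larger than the difference between any upper and lower bounds on each $y_i$ and than the difference between maximum and minimum of each $f_i$),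 minimize $F((x_i,y_i)_{i\in I})+G((\zeta_i^{(1)},\zeta_i^{(0)})_{i\in I})$ over $x_i\in\{0,1\}$, $y_i,\widetilde y_i^{(1)},\widetilde y_i^{(0)}\in\mathbb{R}^m$, $\widetilde\lambda_i^{(1)},\widetilde\lambda_i^{(0)}\in\mathbb{R}^k_+$, $\kappa_i^{(1)},\kappa_i^{(0)},\zeta_i^{(1)},\zeta_i^{(0)}\in\mathbb{R}_+$, subject to, for all $i$ and $b\in\{0,1\}$: $\nabla_{y_i} f_i(b,\widetilde y_i^{(b)},y_{-i})+(\widetilde\lambda_i^{(b)})^T\nabla_{y_i} g_i(b,\widetilde y_i^{(b)})=0$; $0\le -g_i(b,\widetilde y_i^{(b)})\perp\widetilde\lambda_i^{(b)}\ge0$; $f_i(1,\widetilde y_i^{(1)},y_{-i})+\kappa_i^{(1)}-\zeta_i^{(1)}-\kappa_i^{(0)}+\zeta_i^{(0)}=f_i(0,\widetilde y_i^{(0)},y_{-i})$; $\kappa_i^{(1)}+\zeta_i^{(1)}\le x_i\widetilde K$; $\kappa_i^{(0)}+\zeta_i^{(0)}\le(1-x_i)\widetilde K$; $\widetilde y_i^{(0)}-x_i\widetilde K\le y_i\le\widetilde y_i^{(0)}+x_i\widetilde K$; $\widetilde y_i^{(1)}-(1-x_i)\widetilde K\le y_i\le\widetilde y_i^{(1)}+(1-x_i)\widetilde K$. *)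

(* Defs.v *)
From HB Require Import structures.
From mathcomp Require Import all_boot all_order all_algebra.
From mathcomp Require Import all_classical all_reals all_analysis.
Set Implicit Arguments. Unset Strict Implicit. Unset Printing Implicit Defensive.
Import Order.TTheory GRing.Theory Num.Theory.
Import numFieldNormedType.Exports.
Local Open Scope classical_set_scope.
Local Open Scope ring_scope.

Section BinaryGame.
Variable R : realType.

Definition partial (p : nat) (h : 'rV[R]_p -> R) (j : 'I_p) (v : 'rV[R]_p) : R :=
  derive1 (fun t : R => h (v + t *: delta_mx 0 j)) 0.

Definition grad (p : nat) (h : 'rV[R]_p -> R) (v : 'rV[R]_p) : 'rV[R]_p :=
  \row_j partial h j v.

Definition psd (p : nat) (Q : 'M[R]_p) : Prop :=
  forall v : 'rV[R]_p, 0 <= (v *m Q *m v^T) 0 0.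
Definition cvx_quad (p : nat) (h : 'rV[R]_p -> R) : Prop :=
  exists (Q : 'M[R]_p) (c : 'rV[R]_p) (d : R), psd Q /\
    forall v, h v = (v *m Q *m v^T) 0 0 + (v *m c^T) 0 0 + d.

Variables n m k : nat.
(* Game data.  A strategy profile y is an n x m matrix whose i-th row is y_i.
   f i b v y = f_i(b, v, y_{-i}) (row i of y is ignored, see hypothesis
   f_indep below); g i b v = g_i(b, v) in R^k. *)
Variable f : 'I_n -> bool -> 'rV[R]_m -> 'M[R]_(n, m) -> R.
Variable g : 'I_n -> bool -> 'rV[R]_m -> 'rV[R]_k.

Definition f_indep : Prop :=
  forall i b v (y y' : 'M[R]_(n, m)),
    (forall j, j != i -> row j y = row j y') -> f i b v y = f i b v y'.

Definition Kset (i : 'I_n) (b : bool) : set 'rV[R]_m :=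
  [set v | forall l, (g i b v) 0 l <= 0].

Definition is_min (i : 'I_n) (b : bool) (y : 'M[R]_(n, m)) (v : 'rV[R]_m) : Prop :=
  Kset i b v /\ forall w, Kset i b w -> f i b v y <= f i b w y.

Definition KKT (i : 'I_n) (b : bool) (y : 'M[R]_(n, m)) (v : 'rV[R]_m)
    (lam : 'rV[R]_k) : Prop :=
  grad (fun w => f i b w y) v
    + \sum_(l < k) lam 0 l *: grad (fun w => (g i b w) 0 l) v = 0
  /\ forall l, 0 <= - (g i b v) 0 l /\ 0 <= lam 0 l
               /\ (g i b v) 0 l * lam 0 l = 0.

Definition A1 : Prop :=
  forall i b (y : 'M[R]_(n, m)),
    Kset i b !=set0 /\ compact (Kset i b) /\
    forall v, is_min i b y v <-> exists lam, KKT i b y v lam.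

Definition quasi_eq (x : 'I_n -> bool) (y : 'M[R]_(n, m)) (zeta : 'I_n -> R) : Prop :=
  forall i,
    is_min i (x i) y (row i y) /\ 0 <= zeta i /\
    exists yx, is_min i (~~ x i) y yx /\
      f i (x i) (row i y) y - zeta i <= f i (~~ x i) yx y /\
      forall z, 0 <= z -> f i (x i) (row i y) y - z <= f i (~~ x i) yx y ->
        zeta i <= z.

Definition bR (b : bool) : R := (b : nat)%:R.

(* feasibility for problem (P); b = true stands for superscript (1),
   b = false for superscript (0). *)
Definition feasP (K : R) (x : 'I_n -> bool) (y : 'M[R]_(n, m))
    (yt : 'I_n -> bool -> 'rV[R]_m) (lam : 'I_n -> bool -> 'rV[R]_k)
    (kap zet : 'I_n -> bool -> R) : Prop :=
  forall i,
    (forall b, KKT i b y (yt i b) (lam i b) /\ 0 <= kap i b /\ 0 <= zet i b) /\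
    f i true (yt i true) y + kap i true - zet i true - kap i false + zet i false
      = f i false (yt i false) y /\
    kap i true + zet i true <= bR (x i) * K /\
    kap i false + zet i false <= (1 - bR (x i)) * K /\
    (forall j, (yt i false) 0 j - bR (x i) * K <= y i j
               <= (yt i false) 0 j + bR (x i) * K) /\
    (forall j, (yt i true) 0 j - (1 - bR (x i)) * K <= y i j
               <= (yt i true) 0 j + (1 - bR (x i)) * K).

Variable F : ('I_n -> bool) -> 'M[R]_(n, m) -> R.
(* G evaluated at (zeta^(1), zeta^(0)) given as two row vectors *)
Variable G : 'rV[R]_n -> 'rV[R]_n -> R.

Definition objP (x : 'I_n -> bool) (y : 'M[R]_(n, m)) (zet : 'I_n -> bool -> R) : R :=
  F x y + G (\row_i zet i true) (\row_i zet i false).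

Definition Gflat (z : 'rV[R]_(n + n)) : R := G (lsubmx z) (rsubmx z).

Definition A2 : Prop :=
  (forall x, cvx_quad (fun v : 'rV[R]_(n * m) => F x (vec_mx v))) /\
  cvx_quad Gflat /\
  (forall z : 'rV[R]_(n + n), (forall j, 0 <= z 0 j) ->
     forall j, 0 < partial Gflat j z).

Definition bigK (K : R) : Prop :=
  0 < K /\
  (forall i b b' v v', Kset i b v -> Kset i b' v' ->
     forall j, `|v 0 j - v' 0 j| < K) /\
  (forall i (y : 'M[R]_(n, m)), (forall j, exists b, Kset j b (row j y)) ->
     forall b b' v v', Kset i b v -> Kset i b' v' ->
       `|f i b v y - f i b' v' y| < K).

End BinaryGame.

(* Main.v *)
Require Import Defs.
From HB Require Import structures.
From mathcomp Require Import all_boot all_order all_algebra.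
From mathcomp Require Import all_classical all_reals all_analysis.
From mathcomp Require Import ring lra.

Import Order.TTheory GRing.Theory Num.Theory.
Import numFieldNormedType.Exports.
Local Open Scope classical_set_scope.
Local Open Scope ring_scope.
Lemma dq (R : realType) (A B C : R) :
  derive1 (fun s : R => C + s * B + s ^+ 2 * A) 0 = B.
Proof.
rewrite derive1E derive_val.
by rewrite !scaler0 !scale0r !add0r scaler0 addr0 mul1r /GRing.scale /= mulr1.
Qed.

Lemma quad_line (R : realType) p (h : 'rV[R]_p -> R) : cvx_quad h ->
  forall w e, exists A B, 0 <= A /\ forall s, h (w + s *: e) = h w + s * B + s ^+ 2 * A.
Proof.
move=> [Q [c [d [psdQ hE]]]] w e.
exists ((e *m Q *m e^T) 0 0).
exists ((e *m Q *m w^T) 0 0 + (w *m Q *m e^T) 0 0 + (e *m c^T) 0 0).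
split; first exact: psdQ.
move=> s; rewrite !hE.
rewrite linearD /= linearZ /= !mulmxDl !mulmxDr -!scalemxAl -!scalemxAr.
set a1 := w *m Q *m w^T; set a2 := w *m Q *m e^T; set a3 := e *m Q *m w^T.
set a4 := e *m Q *m e^T; set c1 := w *m c^T; set c2 := e *m c^T.
rewrite !mxE.
ring.
Qed.

Lemma partial_line (R : realType) p (h : 'rV[R]_p -> R) : cvx_quad h ->
  forall j w, exists A, 0 <= A /\ forall s,
   h (w + s *: delta_mx 0 j) = h w + s * partial h j w + s ^+ 2 * A.
Proof.
move=> hq j w; have [A [B [A0 HE]]] := @quad_line _ _ _ hq w (delta_mx 0 j).
have -> : partial h j w = B.
  rewrite /partial (_ : (fun t => _) = (fun s => h w + s * B + s ^+ 2 * A)).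
    exact: dq.
  by apply: funext => s; rewrite HE.
by exists A.
Qed.

Lemma Gdec (R : realType) p (H : 'rV[R]_p -> R) : cvx_quad H ->
  (forall z : 'rV[R]_p, (forall j, 0 <= z 0 j) -> forall j, 0 < partial H j z) ->
  forall (z : 'rV[R]_p) j (d : R), (forall j', 0 <= z 0 j') -> 0 < d -> d <= z 0 j ->
  H (z - d *: delta_mx 0 j) < H z.
Proof.
move=> hq hp z j d z0 d0 dz.
set w := z - d *: delta_mx 0 j.
have w0 : forall j', 0 <= w 0 j'.
  move=> j'; rewrite /w !mxE eqxx /=.
  case: (eqVneq j' j) => [->|ne]; first by rewrite mulr1 subr_ge0.
  by rewrite mulr0 subr0.
have [A [A0 HE]] := @partial_line _ _ _ hq j w.
have := HE d; rewrite /w subrK => ->.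
have := hp w w0 j.
rewrite -/w => P.
have : 0 < d * partial H j w by apply: mulr_gt0.
have : 0 <= d ^+ 2 * A by apply: mulr_ge0 => //; apply: sqr_ge0.
lra.
Qed.
Lemma posD (R : realType) (a : R) : Num.max a 0 - Num.max (- a) 0 = a.
Proof. rewrite !maxEle; case: (leP a 0); case: (leP (-a) 0); lra. Qed.
Lemma posS (R : realType) (a K : R) : - K < a < K -> Num.max a 0 + Num.max (- a) 0 < K.
Proof. move/andP=> [h1 h2]; rewrite !maxEle; case: (leP a 0); case: (leP (-a) 0); lra. Qed.
Lemma pos0 (R : realType) (a : R) : 0 <= Num.max a 0.
Proof. by rewrite le_max lexx orbT. Qed.

Arguments posD {R}. Arguments posS {R a K}. Arguments pos0 {R}.
Lemma part2 (R : realType) (n m k : nat)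
  (f : 'I_n -> bool -> 'rV[R]_m -> 'M[R]_(n, m) -> R)
  (g : 'I_n -> bool -> 'rV[R]_m -> 'rV[R]_k) (K : R) :
  A1 f g -> bigK f g K ->
  (forall x y zeta, quasi_eq f g x y zeta ->
     exists yt lam kap zet, feasP f g K x y yt lam kap zet).
Proof.
move=> hA1 [K0 [Kv Kf]] x y zeta hq.
have [yx hyx] := choice (fun i => (hq i).2.2).
pose yt i b := if b == x i then row i y else yx i.
have hmin : forall i b, is_min f g i b y (yt i b).
  move=> i b; rewrite /yt; case: eqP => [->|ne]; first exact (hq i).1.
  have -> : b = ~~ x i by move: ne; case: b; case: (x i).
  exact (hyx i).1.
have [lam hlam] := choice (fun ib : 'I_n * bool =>
   proj1 ((hA1 ib.1 ib.2 y).2.2 _) (hmin ib.1 ib.2)).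
pose D i := f i false (yt i false) y - f i true (yt i true) y.
pose kap i b := if b == x i then (if b then Num.max (D i) 0 else Num.max (- D i) 0) else 0.
pose zet i b := if b == x i then (if b then Num.max (- D i) 0 else Num.max (D i) 0) else 0.
exists yt, (fun i b => lam (i, b)), kap, zet.
have hD : forall i, - K < D i < K.
  move=> i; rewrite -ltr_norml; apply: Kf.
  - by move=> j; exists (x j); exact (hq j).1.1.
  - exact (hmin i false).1.
  - exact (hmin i true).1.
have hv : forall i b j, - K < (yt i b) 0 j - y i j < K.
  move=> i b j; have := Kv i b (x i) (yt i b) (row i y) (hmin i b).1 (hq i).1.1 j.
  by rewrite mxE ltr_norml.
move=> i.
have hyi : forall j, (yt i (x i)) 0 j = y i j by move=> j; rewrite /yt eqxx mxE.
have := hD i; have := posD (D i); have := posS (hD i);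
  have := pos0 (D i); have := pos0 (- D i).
rewrite /D => p1 p2 p3 p4 /andP[p5 p6].
split.
  move=> b; split; first exact (hlam (i, b)).
  by rewrite /kap /zet; case: (b == x i); case: b; rewrite ?lexx.
case Hx: (x i) hyi; rewrite /bR /= => hyi.
  rewrite /kap /zet Hx /=.
  split; first lra.
  split; first lra.
  split; first lra.
  split.
    move=> j; have := hv i false j; move/andP=> [h1 h2]; apply/andP; split; lra.
  move=> j; rewrite hyi; apply/andP; split; lra.
rewrite /kap /zet Hx /=.
split; first lra.
split; first lra.
split; first lra.
split.
  move=> j; rewrite hyi; apply/andP; split; lra.
move=> j; have := hv i true j; move/andP=> [h1 h2]; apply/andP; split; lra.
Qed.

Lemma objE (R : realType) (n m : nat) (F : ('I_n -> bool) -> 'M[R]_(n, m) -> R)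
  (G : 'rV[R]_n -> 'rV[R]_n -> R) x y (zet : 'I_n -> bool -> R) :
  objP F G x y zet = F x y + Gflat G (row_mx (\row_i zet i true) (\row_i zet i false)).
Proof. by rewrite /objP /Gflat row_mxKl row_mxKr. Qed.

Lemma comp (R : realType) (n m k : nat)
  (f : 'I_n -> bool -> 'rV[R]_m -> 'M[R]_(n, m) -> R)
  (g : 'I_n -> bool -> 'rV[R]_m -> 'rV[R]_k)
  (F : ('I_n -> bool) -> 'M[R]_(n, m) -> R)
  (G : 'rV[R]_n -> 'rV[R]_n -> R) (K : R) :
  A2 F G ->
  forall x y yt lam kap zet,
     feasP f g K x y yt lam kap zet ->
     (forall x' y' yt' lam' kap' zet', feasP f g K x' y' yt' lam' kap' zet' ->
        objP F G x y zet <= objP F G x' y' zet') ->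
  forall i b, kap i b = 0 \/ zet i b = 0.
Proof.
move=> [_ [hGq hGp]] x y yt lam kap zet hf hopt i b.
case: (eqVneq (kap i b) 0) => [->|hk]; first by left.
case: (eqVneq (zet i b) 0) => [->|hz]; first by right.
exfalso.
have k0 : 0 < kap i b by rewrite lt0r hk ((hf i).1 b).2.1.
have z0 : 0 < zet i b by rewrite lt0r hz ((hf i).1 b).2.2.
have [d [d0 [dk dz]]] : exists d, 0 < d /\ d <= kap i b /\ d <= zet i b.
  exists (if kap i b <= zet i b then kap i b else zet i b).
  case: (leP (kap i b) (zet i b)) => h; (split; [lra|split; lra]).
pose kap' i' b' := if (i' == i) && (b' == b) then kap i' b' - d else kap i' b'.
pose zet' i' b' := if (i' == i) && (b' == b) then zet i' b' - d else zet i' b'.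
have hf' : feasP f g K x y yt lam kap' zet'.
  move=> i'; have := hf i'; rewrite /kap' /zet'.
  case: (eqVneq i' i) => [->|ne] /=; last by [].
  move=> [Hb [Heq [H1 [H2 [H3 H4]]]]].
  split.
    move=> b'; split; first exact (Hb b').1.
    have := (Hb b').2; case: eqP => [->|_] /= [? ?]; split; lra.
  move: Heq H1 H2 H3 H4; clear kap' zet'; case: b dk dz {hk hz k0 z0} => /= dk dz Heq H1 H2 H3 H4;
    (split; [lra|split; [lra|split; [lra| by []]]]).
have := hopt x y yt lam kap' zet' hf'.
rewrite !objE.
set jj : 'I_(n + n) := if b then lshift n i else rshift n i.
have zE : row_mx (\row_i0 zet' i0 true) (\row_i0 zet' i0 false) =
   row_mx (\row_i0 zet i0 true) (\row_i0 zet i0 false) - d *: delta_mx 0 jj.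
  { apply/rowP => j'; rewrite !mxE; case: (split_ordP j') => i' -> /=; rewrite !mxE /jj.
    all: rewrite /zet'; have [Hb|Hb] : b = true \/ b = false by case: (b); auto.
    all: rewrite Hb /= ?eq_lshift ?eq_rshift ?eq_lrshift ?eq_rlshift ?andbT ?andbF
      ?mulr0 ?subr0 //.
    all: by case: (i' == i); rewrite /= ?mulr1 ?mulr0 ?subr0. }
  rewrite zE lerD2l.
  apply/negP; rewrite -ltNge.
  apply: Gdec => //.
  - move=> j'; case: (split_ordP j') => i' ->; rewrite ?row_mxEl ?row_mxEr mxE.
      exact ((hf i').1 true).2.2.
    exact ((hf i').1 false).2.2.
  - by rewrite /jj; case: (b) dz; rewrite ?row_mxEl ?row_mxEr mxE.
Qed.

Lemma part1 (R : realType) (n m k : nat)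
  (f : 'I_n -> bool -> 'rV[R]_m -> 'M[R]_(n, m) -> R)
  (g : 'I_n -> bool -> 'rV[R]_m -> 'rV[R]_k)
  (F : ('I_n -> bool) -> 'M[R]_(n, m) -> R)
  (G : 'rV[R]_n -> 'rV[R]_n -> R) (K : R) :
  A1 f g -> A2 F G ->
  (forall x y yt lam kap zet,
     feasP f g K x y yt lam kap zet ->
     (forall x' y' yt' lam' kap' zet', feasP f g K x' y' yt' lam' kap' zet' ->
        objP F G x y zet <= objP F G x' y' zet') ->
     quasi_eq f g x y (fun i => zet i true + zet i false)).
Proof.
move=> hA1 hA2 x y yt lam kap zet hf hopt i.
have hc := @comp _ _ _ _ f g F G K hA2 x y yt lam kap zet hf hopt i.
have [Hb [Heq [H1 [H2 [H3 H4]]]]] := hf i.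
have kmin : forall b, is_min f g i b y (yt i b).
  move=> b; apply/((hA1 i b y).2.2 _); exists (lam i b); exact (Hb b).1.
have [a1 a2] := (Hb true).2; have [a3 a4] := (Hb false).2.
case Hx: (x i) H1 H2 H3 H4; rewrite /bR /= => H1 H2 H3 H4.
  have hrow : row i y = yt i true.
    apply/rowP => j; rewrite mxE; have /andP[h1 h2] := H4 j.
    apply/eqP; rewrite eq_le; apply/andP; split; lra.
  rewrite hrow; split; first exact: kmin.
  split; first lra.
  exists (yt i false); split; first exact: kmin.
  split; first lra.
  move=> z z0 hz; case: (hc true) => e; lra.
have hrow : row i y = yt i false.
  apply/rowP => j; rewrite mxE; have /andP[h1 h2] := H3 j.
  apply/eqP; rewrite eq_le; apply/andP; split; lra.
rewrite hrow; split; first exact: kmin.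
split; first lra.
exists (yt i true); split; first exact: kmin.
split; first lra.
move=> z z0 hz; case: (hc false) => e; lra.
Qed.

Theorem theorem2 (R : realType) (n m k : nat)
  (f : 'I_n -> bool -> 'rV[R]_m -> 'M[R]_(n, m) -> R)
  (g : 'I_n -> bool -> 'rV[R]_m -> 'rV[R]_k)
  (F : ('I_n -> bool) -> 'M[R]_(n, m) -> R)
  (G : 'rV[R]_n -> 'rV[R]_n -> R) (K : R) :
  f_indep f -> A1 f g -> A2 F G -> bigK f g K ->
  (* (i) optimal solutions of (P) give binary quasi-equilibria *)
  (forall x y yt lam kap zet,
     feasP f g K x y yt lam kap zet ->
     (forall x' y' yt' lam' kap' zet', feasP f g K x' y' yt' lam' kap' zet' ->
        objP F G x y zet <= objP F G x' y' zet') ->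
     quasi_eq f g x y (fun i => zet i true + zet i false)) /\
  (* (ii) binary quasi-equilibria extend to feasible points of (P) *)
  (forall x y zeta, quasi_eq f g x y zeta ->
     exists yt lam kap zet, feasP f g K x y yt lam kap zet).
Proof.
move=> _ hA1 hA2 hK; split.
  exact: (@part1 R n m k f g F G K hA1 hA2).
exact: (@part2 R n m k f g K hA1 hK).
Qed.
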